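(* Let $G$ be an embedded graph and let $\tilde G$ be the embedded graph obtained by subdividing every edge $e$ of $G$ exactly once by a new vertex $\tilde e$, placed on the curve of $e$ between one endpoint of $e$ and the first crossing point of $e$ in that direction (so that the resulting edge from that endpoint to $\tilde e$ is uncrossed); let $D(\tilde G)=\{\tilde e: e\in E(G)\}$. If $(A,X,B)$ is a co-separating triple of $(\Lambda(\tilde G),\tilde G)$ with $X\cap V(\tilde G)\subseteq D(\tilde G)$, then the set $\{e\in E(G):\tilde e\in X\}$ is an edge cut of $G$ (its removal disconnects $G$).
   Context: Graphs may have parallel edges. A drawing of a graph $G$ maps the vertices to distinct points of the plane and each edge to a curve (a homeomorphic image of $[0,1]$) joining the images of its endpoints whose interior contains no vertex. A crossing is a point interior to two distinct edges; no third edge passes through it, and the two edges cross transversally there. An embedded graph is a graph together with such a drawing. Its planarization $H^\times$ is the plane graph obtained by inserting a dummy-vertex at every crossing point; for an edge $e$, $e^\times$ denotes the walk in $H^\times$ from one endpoint of $e$ to the other through the crossing points on $e$ in order, and $V(e^\times)$ its vertex set. $\Lambda(H)$ is obtained from $H^\times$ by inserting inside each face of $H^\times$ a new face-vertex adjacent to all vertices of $H^\times$ on the boundary of that face. A co-separating triple of $(\Lambda(H),H)$ is a partition $(A,X,B)$ of $V(\Lambda(H))$ such that: (C1) each of $A,X,B$ contains at least one vertex of $H$; (C2) no edge of $\Lambda(H)$ has one endpoint in $A$ and the other in $B$; (C3) for every edge $e\in E(H)$, either both endpoints of $e$ lie in $X$, or $V(e^\times)\subseteq A\cup X$, or $V(e^\times)\subseteq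 B\cup X$. *)

(* Defs.v *)
From HB Require Import structures.
From mathcomp Require Import all_boot all_order all_algebra.
From mathcomp Require Import all_classical all_reals all_analysis.
From Stdlib Require Import Relations.
Set Implicit Arguments. Unset Strict Implicit. Unset Printing Implicit Defensive.
Import Order.TTheory GRing.Theory Num.Theory.
Import numFieldNormedType.Exports.
Local Open Scope classical_set_scope.
Local Open Scope ring_scope.

(* Vertices of Lambda(H): points of the plane (vertices of the planarization
   H^x, i.e. vertex points and crossing points) and face-vertices (a face is
   represented by the open set of the plane it occupies). *)
Inductive lvert (R : realType) := LPt of (R * R) | LFace of set (R * R).
Arguments LPt {R}. Arguments LFace {R}.

Section Drawing.
Context {R : realType} {V E : finType}.
(* An embedded graph: edges E with endpoints src/tgt (parallel edges allowed),
   vertex positions vpos, and each edge e drawn as the curve t |-> curve e t,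
   t in [0,1]. *)
Variables (src tgt : E -> V) (vpos : V -> R * R) (curve : E -> R -> R * R).

Definition I01 : set R := [set t | 0 <= t <= 1].
Definition I01o : set R := [set t | 0 < t < 1].
Definition ecurve (e : E) : set (R * R) := curve e @` I01.
Definition einter (e : E) : set (R * R) := curve e @` I01o.
Definition unit_disk : set (R * R) := [set y | y.1 ^+ 2 + y.2 ^+ 2 < 1].

Definition transversal_at (C1 C2 : set (R * R)) (p : R * R) : Prop :=
  exists (U : set (R * R)) (h g : R * R -> R * R),
    open U /\ U p /\ h p = ((0 : R), (0 : R)) /\
    (forall x, U x -> unit_disk (h x) /\ g (h x) = x) /\
    (forall y, unit_disk y -> U (g y) /\ h (g y) = y) /\
    {within U, continuous h} /\ {within unit_disk, continuous g} /\
    (forall x, U x -> (C1 x <-> (h x).2 = 0)) /\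
    (forall x, U x -> (C2 x <-> (h x).1 = 0)).

Definition crossing (p : R * R) : Prop :=
  exists e f : E, e <> f /\ einter e p /\ einter f p.

Definition is_drawing : Prop :=
  injective vpos /\
  (forall e, {within I01, continuous (curve e)}) /\
  (forall e s t, I01 s -> I01 t -> curve e s = curve e t -> s = t) /\
  (forall e, curve e 0 = vpos (src e) /\ curve e 1 = vpos (tgt e)) /\
  (forall e v, ~ einter e (vpos v)) /\
  (forall e f g p, e <> f -> einter e p -> einter f p -> ecurve g p ->
      g = e \/ g = f) /\
  (forall e f p, e <> f -> einter e p -> einter f p ->
      transversal_at (ecurve e) (ecurve f) p) /\
  finite_set crossing.

Definition hvert (p : R * R) : Prop := (exists v, p = vpos v) \/ crossing p.
Definition drawn (p : R * R) : Prop := (exists v, p = vpos v) \/ (exists e, ecurve e p).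
Definition is_face (F : set (R * R)) : Prop :=
  exists x, ~ drawn x /\ F = connected_component (~` drawn) x.
Definition hadj (p q : R * R) : Prop :=
  exists e s t, I01 s /\ I01 t /\ s < t /\ curve e s = p /\ curve e t = q /\
    hvert p /\ hvert q /\ (forall r, s < r < t -> ~ hvert (curve e r)).

Definition lam_vert (x : lvert R) : Prop :=
  match x with LPt p => hvert p | LFace F => is_face F end.

Definition lam_adj (x y : lvert R) : Prop :=
  match x, y with
  | LPt p, LPt q => hadj p q \/ hadj q p
  | LFace F, LPt p => is_face F /\ hvert p /\ closure F p
  | LPt p, LFace F => is_face F /\ hvert p /\ closure F p
  | LFace _, LFace _ => False
  end.

Definition evert (e : E) : set (R * R) := [set p | hvert p /\ ecurve e p].

Definition coseparating (A X B : set (lvert R)) : Prop :=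
  (forall x, lam_vert x <-> A x \/ X x \/ B x) /\
  (forall x, ~ (A x /\ X x)) /\ (forall x, ~ (A x /\ B x)) /\
  (forall x, ~ (X x /\ B x)) /\
  (exists v, A (LPt (vpos v))) /\ (exists v, X (LPt (vpos v))) /\
  (exists v, B (LPt (vpos v))) /\
  (forall a b, A a -> B b -> ~ lam_adj a b) /\
  (forall e, (X (LPt (vpos (src e))) /\ X (LPt (vpos (tgt e))))
     \/ (forall p, evert e p -> A (LPt p) \/ X (LPt p))
     \/ (forall p, evert e p -> B (LPt p) \/ X (LPt p))).

End Drawing.

Section Subdivision.
Context {R : realType} {V E : finType}.
(* Subdivided graph: vertices V + E (inr e is the new vertex ~e),
   edges E * bool: (e,false) runs src e -> ~e, (e,true) runs ~e -> tgt e.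
   ~e sits at curve e (tau e). *)
Definition sub_src (src : E -> V) (d : E * bool) : V + E :=
  if d.2 then inr d.1 else inl (src d.1).
Definition sub_tgt (tgt : E -> V) (d : E * bool) : V + E :=
  if d.2 then inl (tgt d.1) else inr d.1.
Definition sub_pos (vpos : V -> R * R) (curve : E -> R -> R * R) (tau : E -> R)
  (x : V + E) : R * R :=
  match x with inl v => vpos v | inr e => curve e (tau e) end.
Definition sub_curve (curve : E -> R -> R * R) (tau : E -> R) (d : E * bool)
  (t : R) : R * R :=
  if d.2 then curve d.1 (tau d.1 + (1 - tau d.1) * t)
  else curve d.1 (tau d.1 * t).

(* ~e is placed strictly inside e, between the endpoint chosen by side e
   (false: src e, true: tgt e) and the first crossing of e in that direction,
   so the piece from that endpoint to ~e is uncrossed. *)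
Definition valid_subdiv (curve : E -> R -> R * R) (side : E -> bool)
  (tau : E -> R) : Prop :=
  forall e, 0 < tau e < 1 /\
    (forall s, (if side e then tau e <= s < 1 else 0 < s <= tau e) ->
       forall f, f <> e -> ~ einter curve f (curve e s)).
End Subdivision.

Definition edge_cut {V E : finType} (src tgt : E -> V) (S : set E) : Prop :=
  exists u w : V, ~ clos_refl_trans V
    (fun a b => exists e, ~ S e /\
       ((src e = a /\ tgt e = b) \/ (src e = b /\ tgt e = a))) u w.

(* Main.v *)
Require Import Defs.
From mathcomp Require Import all_boot all_order all_algebra.
From mathcomp Require Import all_classical all_reals all_analysis.
From Stdlib Require Import Relations.
Import Order.TTheory GRing.Theory Num.Theory.
Local Open Scope classical_set_scope.
Local Open Scope ring_scope.

Lemma logic_iff (T : Type) (A X B : T -> Prop) a b :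
  (forall x, ~ (A x /\ B x)) -> ~ X a -> ~ X b ->
  (X a /\ X b) \/ ((A a \/ X a) /\ (A b \/ X b)) \/ ((B a \/ X a) /\ (B b \/ X b)) ->
  (A a <-> A b).
Proof.
move=> dis; have := dis a; have := dis b; tauto.
Qed.

Theorem mainTheorem6 (R : realType) (V E : finType)
  (src tgt : E -> V) (vpos : V -> R * R) (curve : E -> R -> R * R)
  (side : E -> bool) (tau : E -> R) (A X B : set (lvert R)) :
  is_drawing src tgt vpos curve ->
  valid_subdiv curve side tau ->
  coseparating (sub_src src) (sub_tgt tgt) (sub_pos vpos curve tau)
    (sub_curve curve tau) A X B ->
  (forall x : V + E, X (LPt (sub_pos vpos curve tau x)) -> exists e, x = inr e) ->
  edge_cut src tgt [set e | X (LPt (curve e (tau e)))].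
Proof.
move=> [_ [_ [_ [ends _]]]] _ [_ [dAX [dAB [dXB [[a0 Ha0] [_ [[b0 Hb0] [_ C3]]]]]]]] hX.
have nXv : forall v, ~ X (LPt (vpos v)).
  by move=> v /(hX (inl v)) [e]. 
have ev : forall (d : E * bool) (x : V + E),
    (x = sub_src src d \/ x = sub_tgt tgt d) ->
    evert (sub_pos vpos curve tau)
      (sub_curve curve tau) d (sub_pos vpos curve tau x).
  move=> [e b] x Hx; split; first by left; exists x.
  case: b Hx => [] [->|->] /=.
  - exists 0; first by rewrite /I01 /= lexx ler01.
    by rewrite /sub_curve /= mulr0 addr0.
  - exists 1; first by rewrite /I01 /= lexx ler01.
    by rewrite /sub_curve /= mulr1 subrKC; case: (ends e).
  - exists 0; first by rewrite /I01 /= lexx ler01.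
    by rewrite /sub_curve /= mulr0; case: (ends e).
  - exists 1; first by rewrite /I01 /= lexx ler01.
    by rewrite /sub_curve /= mulr1.
have key : forall d : E * bool,
    ~ X (LPt (sub_pos vpos curve tau (sub_src src d))) ->
    ~ X (LPt (sub_pos vpos curve tau (sub_tgt tgt d))) ->
    (A (LPt (sub_pos vpos curve tau (sub_src src d))) <->
     A (LPt (sub_pos vpos curve tau (sub_tgt tgt d)))).
  move=> d n1 n2; apply: (@logic_iff _ A X B _ _ dAB n1 n2).
  case: (C3 d) => [H|[H|H]]; [left|right;left|right;right] => //; split; apply: H;
    apply: ev; tauto.
have kf : forall e, ~ X (LPt (curve e (tau e))) ->
    (A (LPt (vpos (src e))) <-> A (LPt (curve e (tau e)))).
  by move=> e ne; apply: (key (e, false)) => //=; apply: nXv.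
have kt : forall e, ~ X (LPt (curve e (tau e))) ->
    (A (LPt (curve e (tau e))) <-> A (LPt (vpos (tgt e)))).
  by move=> e ne; apply: (key (e, true)) => //=; apply: nXv.
have [u Hu] : exists u, A (LPt (vpos u)).
  case: a0 Ha0 => [v|e] H; first by exists v.
  exists (src e). have ne : ~ X (LPt (curve e (tau e))).
    by move=> Hx; apply: (dAX (LPt (curve e (tau e)))); split.
  by apply/(kf e ne).
have [w Hw] : exists w, ~ A (LPt (vpos w)).
  case: b0 Hb0 => [v|e] H.
    by exists v => Ha; apply: (dAB (LPt (vpos v))).
  exists (src e). have ne : ~ X (LPt (curve e (tau e))).
    by move=> Hx; apply: (dXB (LPt (curve e (tau e)))); split.
  by move=> /(kf e ne) Ha; apply: (dAB (LPt (curve e (tau e)))).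
exists u, w => Hc; apply: Hw.
elim: Hc Hu => {u w} [a b [e [ne [[<- <-]|[<- <-]]]]|a|a b c _ IH1 _ IH2] //.
- by move=> H; apply/(kt e ne)/(kf e ne).
- by move=> H; apply/(kf e ne)/(kt e ne).
- by move=> H; apply: IH2; apply: IH1.
Qed.
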